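(* Let $\mathcal M$ be a Hilbert space of $\mathcal Y$-valued functions whose elements belong to $\mathcal H_{\mathcal Y}(k_d)$, and assume $\mathcal M$ is invariant under $M^*_{\lambda_j}$ for $j=1,\dots,d$. (1) If $\sum_{j=1}^d\|M^*_{\lambda_j}f\|^2_{\mathcal M}\le\|f\|^2_{\mathcal M}-\|f(0)\|^2_{\mathcal Y}$ for every $f\in\mathcal M$, then $\mathcal M=\operatorname{Ran}\widehat{\mathcal O}^{\mathbf a}_{C,\mathbf A}$ for a contractive pair $(C,\mathbf A)$ with $\mathbf A=(A_1,\dots,A_d)$ commutative which is exactly observable with respect to $\mathcal M$. In particular $\mathcal M$ is contractively included in $\mathcal H_{\mathcal Y}(k_d)$. (2) If $\sum_{j=1}^d\|M^*_{\lambda_j}f\|^2_{\mathcal M}=\|f\|^2_{\mathcal M}-\|f(0)\|^2_{\mathcal Y}$ for every $f\in\mathcal M$, then $\mathcal M=\operatorname{Ran}\widehat{\mathcal O}^{\mathbf a}_{C,\mathbf A}$ for an isometric pair $(C,\mathbf A)$ with $\mathbf A$ commutative which is exactly observable with respect to $\mathcal M$; $\mathcal M$ is contractively included in $\mathcal H_{\mathcal Y}(k_d)$, and it is isometrically included in $\mathcal H_{\mathcal Y}(k_d)$ if and only if $$\lim_{N\to\infty}\sum_{\mathbf n\in\mathbb Z^d_+,|\mathbf n|=N}\frac{N!}{\mathbf n!}\|(\mathbf M^*_{\boldsymbol\lambda})^{\mathbf n}f\|^2_{\mathcal M}=0\quad\text{for every }f\in\mathcal M.$$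
   Context: For $\mathbf n\in\mathbb Z^d_+$: $|\mathbf n|=\sum n_k$, $\mathbf n!=\prod n_k!$, $\boldsymbol\lambda^{\mathbf n}=\prod\lambda_k^{n_k}$. Arveson space $\mathcal H_{\mathcal Y}(k_d)$: functions $\sum_{\mathbf n}f_{\mathbf n}\boldsymbol\lambda^{\mathbf n}$ on the unit ball $\mathbb B^d$ with $\|f\|^2=\sum_{\mathbf n}\frac{\mathbf n!}{|\mathbf n|!}\|f_{\mathbf n}\|^2_{\mathcal Y}<\infty$; $M_{\lambda_j}$: multiplication by $\lambda_j$ there; $M^*_{\lambda_j}$: its adjoint in $\mathcal H_{\mathcal Y}(k_d)$; $(\mathbf M^*_{\boldsymbol\lambda})^{\mathbf n}=(M^*_{\lambda_1})^{n_1}\cdots(M^*_{\lambda_d})^{n_d}$. For a commuting tuple $\mathbf A$ on a Hilbert space $\mathcal X$ and $C\in\mathcal L(\mathcal X,\mathcal Y)$, $\widehat{\mathcal O}^{\mathbf a}_{C,\mathbf A}x=\sum_{\mathbf n}\frac{|\mathbf n|!}{\mathbf n!}(C\mathbf A^{\mathbf n}x)\boldsymbol\lambda^{\mathbf n}=C(I-\sum_j\lambda_jA_j)^{-1}x$. Contractive pair: $C^*C+\sum_jA_j^*A_j\le I$; isometric: equality. ''Exactly observable with respect to $\mathcal M$'' means that $\widehat{\mathcal O}^{\mathbf a}_{C,\mathbf A}$, regarded as an operator from $\mathcal X$ into $\mathcal M$, is bounded and bounded below. $\mathcal M$ is contractively (resp. isometrically) included in $\mathcal H_{\mathcal Y}(k_d)$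 if $\|f\|_{\mathcal H_{\mathcal Y}(k_d)}\le\|f\|_{\mathcal M}$ (resp. $=$) for $f\in\mathcal M$. *)

(* Defs.v *)
From HB Require Import structures.
From mathcomp Require Import all_boot all_order all_algebra.
From mathcomp Require Import all_classical all_reals all_analysis.
From mathcomp Require Import complex.

Set Implicit Arguments.
Unset Strict Implicit.
Unset Printing Implicit Defensive.

Import Order.TTheory GRing.Theory Num.Theory numFieldNormedType.Exports.
Local Open Scope ring_scope.
Local Open Scope complex_scope.

Section Defs.
Variable R : realType.
Local Notation C := (R[i]).

Definition is_inner_product (V : lmodType C) (ip : V -> V -> C) : Prop :=
  [/\ (forall (a : C) (x y z : V), ip (a *: x + y) z = a * ip x z + ip y z),
      (forall x y : V, ip y x = conjc (ip x y)),
      (forall x : V, 0 <= ip x x) &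
      (forall x : V, ip x x = 0 -> x = 0)].

Definition hnorm (V : Type) (ip : V -> V -> C) (x : V) : R :=
  Num.sqrt (complex.Re (ip x x)).

Definition ip_complete (V : lmodType C) (ip : V -> V -> C) : Prop :=
  forall u : nat -> V,
    (forall e : R, 0 < e -> exists N : nat, forall m n : nat,
        (N <= m)%N -> (N <= n)%N -> hnorm ip (u m - u n) < e) ->
    exists v : V, forall e : R, 0 < e -> exists N : nat, forall n : nat,
        (N <= n)%N -> hnorm ip (u n - v) < e.

Definition is_hilbert (V : lmodType C) (ip : V -> V -> C) : Prop :=
  is_inner_product ip /\ ip_complete ip.

Definition bounded_op (V W : lmodType C) (ipV : V -> V -> C) (ipW : W -> W -> C)
  (T : V -> W) : Prop :=
  exists K : R, forall x : V, hnorm ipW (T x) <= K * hnorm ipV x.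

Variable d : nat.

Definition mi := 'I_d -> nat.
Definition mi_abs (n : mi) : nat := (\sum_(i < d) n i)%N.
Definition mi_fact (n : mi) : nat := (\prod_(i < d) (n i)`!)%N.
Definition mi_succ (j : 'I_d) (n : mi) : mi := fun i => (n i + (i == j))%N.

Definition deg_sum (N : nat) (F : mi -> R) : R :=
  \sum_(m : {ffun 'I_d -> 'I_N.+1} | (\sum_(i < d) (m i : nat))%N == N)
     F (fun i => nat_of_ord (m i)).

Definition arv_w (n : mi) : R := (mi_fact n)%:R / (mi_abs n)`!%:R.

(* ---------- the Arveson space H_Y(k_d) ----------
   A function sum_n f_n lambda^n on the ball is represented by its family of
   Taylor coefficients f : mi -> Y. *)
Variable Y : lmodType C.
Variable ipY : Y -> Y -> C.

Definition arv_terms (f : mi -> Y) (N : nat) : R :=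
  deg_sum N (fun n => arv_w n * hnorm ipY (f n) ^+ 2).

Definition in_arveson (f : mi -> Y) : Prop :=
  exists B : R, forall K : nat, \sum_(N < K) arv_terms f N <= B.

Definition arv_norm (f : mi -> Y) : R :=
  Num.sqrt (limn (series (arv_terms f))).

(* M^*_{lambda_j}, the adjoint in H_Y(k_d) of multiplication by lambda_j:
   (M^*_{lambda_j} f)_n = (w(n+e_j)/w(n)) f_{n+e_j}  (w = Arveson weight) *)
Definition Mstar (j : 'I_d) (f : mi -> Y) : mi -> Y :=
  fun n => ((arv_w (mi_succ j n) / arv_w n) : R)%:C *: f (mi_succ j n).

Definition Mstar_pow (n : mi) : (mi -> Y) -> (mi -> Y) :=
  foldr (fun j g => iter (n j) (Mstar j) \o g) id (enum 'I_d).

Definition eval0 (f : mi -> Y) : Y := f (fun _ => 0%N).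

Record fun_hilbert := FunHilbert {
  fh_mem : (mi -> Y) -> Prop;
  fh_ip : (mi -> Y) -> (mi -> Y) -> C;
  fh_zero : fh_mem (fun _ => 0);
  fh_lin : forall (a : C) f g, fh_mem f -> fh_mem g ->
             fh_mem (fun n => a *: f n + g n);
  fh_ip_lin : forall (a : C) f g h, fh_mem f -> fh_mem g -> fh_mem h ->
       fh_ip (fun n => a *: f n + g n) h = a * fh_ip f h + fh_ip g h;
  fh_ip_sym : forall f g, fh_mem f -> fh_mem g -> fh_ip g f = conjc (fh_ip f g);
  fh_ip_pos : forall f, fh_mem f -> 0 <= fh_ip f f;
  fh_ip_def : forall f, fh_mem f -> fh_ip f f = 0 -> f = (fun _ => 0);
  fh_complete : forall u : nat -> (mi -> Y), (forall k, fh_mem (u k)) ->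
    (forall e : R, 0 < e -> exists N : nat, forall m n : nat,
        (N <= m)%N -> (N <= n)%N -> hnorm fh_ip (fun i => u m i - u n i) < e) ->
    exists v, fh_mem v /\ forall e : R, 0 < e -> exists N : nat, forall n : nat,
        (N <= n)%N -> hnorm fh_ip (fun i => u n i - v i) < e
}.

Section Obs.
Variables (X : lmodType C) (A : 'I_d -> X -> X) (Cop : X -> Y).

Definition op_pow (n : mi) : X -> X :=
  foldr (fun j g => iter (n j) (A j) \o g) id (enum 'I_d).

Definition obs_op (x : X) : mi -> Y :=
  fun n => (((mi_abs n)`!%:R / (mi_fact n)%:R : R)%:C) *: Cop (op_pow n x).
End Obs.

Definition commuting (X : Type) (A : 'I_d -> X -> X) : Prop :=
  forall i j x, A i (A j x) = A j (A i x).

(* C^*C + sum_j A_j^*A_j <= I *)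
Definition contractive_pair (X : lmodType C) (ipX : X -> X -> C)
  (Cop : X -> Y) (A : 'I_d -> X -> X) : Prop :=
  forall x, hnorm ipY (Cop x) ^+ 2 + \sum_(j < d) hnorm ipX (A j x) ^+ 2
            <= hnorm ipX x ^+ 2.

(* C^*C + sum_j A_j^*A_j = I, i.e. <(C^*C + sum A_j^*A_j) x, y> = <x, y> *)
Definition isometric_pair (X : lmodType C) (ipX : X -> X -> C)
  (Cop : X -> Y) (A : 'I_d -> X -> X) : Prop :=
  forall x y, ipY (Cop x) (Cop y) + \sum_(j < d) ipX (A j x) (A j y) = ipX x y.

Definition exactly_observable (M : fun_hilbert) (X : lmodType C)
  (ipX : X -> X -> C) (Cop : X -> Y) (A : 'I_d -> X -> X) : Prop :=
  (forall x, fh_mem M (obs_op A Cop x)) /\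
  exists c1 c2 : R, 0 < c1 /\ 0 < c2 /\ forall x,
     c1 * hnorm ipX x <= hnorm (fh_ip M) (obs_op A Cop x) /\
     hnorm (fh_ip M) (obs_op A Cop x) <= c2 * hnorm ipX x.

Definition range_obs (M : fun_hilbert) (X : lmodType C)
  (Cop : X -> Y) (A : 'I_d -> X -> X) : Prop :=
  forall f, fh_mem M f <-> exists x, f = obs_op A Cop x.

Definition contractively_included (M : fun_hilbert) : Prop :=
  forall f, fh_mem M f -> arv_norm f <= hnorm (fh_ip M) f.

Definition isometrically_included (M : fun_hilbert) : Prop :=
  forall f, fh_mem M f -> arv_norm f = hnorm (fh_ip M) f.

End Defs.

(* Main.v *)
Require Import Defs.
From HB Require Import structures.
From mathcomp Require Import all_boot all_order all_algebra.
From mathcomp Require Import all_classical all_reals all_analysis.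
From mathcomp Require Import complex.
From mathcomp Require Import ring lra zify.
Import Order.TTheory GRing.Theory Num.Theory numFieldNormedType.Exports.
Local Open Scope ring_scope.
Local Open Scope complex_scope.
Local Open Scope classical_set_scope.
Set Implicit Arguments.
Unset Strict Implicit.
Unset Printing Implicit Defensive.
Section Sp.
Variables (R : realType) (d : nat) (Y : lmodType (R[i])) (M : fun_hilbert d Y).

Record Xt := MkX { xv : mi d -> Y ; xm : fh_mem M xv }.

Lemma xv_inj : injective xv.
Proof.
case=> f hf [g hg] /= efg; subst g; by rewrite (Prop_irrelevance hf hg).
Qed.

HB.instance Definition _ := gen_eqMixin Xt.
HB.instance Definition _ := gen_choiceMixin Xt.

Lemma mem_lin (a : R[i]) f g : fh_mem M f -> fh_mem M g ->
  fh_mem M (fun n => a *: f n + g n).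
Proof. exact: fh_lin. Qed.

Lemma mem_add f g : fh_mem M f -> fh_mem M g -> fh_mem M (fun n => f n + g n).
Proof.
move=> hf hg; have := mem_lin 1 hf hg.
by have -> : (fun n => 1 *: f n + g n) = (fun n => f n + g n)
  by apply: funext => n; rewrite scale1r.
Qed.

Lemma mem_scale (a : R[i]) f : fh_mem M f -> fh_mem M (fun n => a *: f n).
Proof.
move=> hf; have := mem_lin a hf (fh_zero M).
by have -> : (fun n => a *: f n + 0) = (fun n => a *: f n)
  by apply: funext => n; rewrite addr0.
Qed.

Lemma mem_opp f : fh_mem M f -> fh_mem M (fun n => - f n).
Proof.
move=> hf; have := mem_scale (-1) hf.
by have -> : (fun n => (-1) *: f n) = (fun n => - f n)
  by apply: funext => n; rewrite scaleN1r.
Qed.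

Definition xzero := MkX (fh_zero M).
Definition xadd (x y : Xt) := MkX (mem_add (xm x) (xm y)).
Definition xopp (x : Xt) := MkX (mem_opp (xm x)).
Definition xscale (a : R[i]) (x : Xt) := MkX (mem_scale a (xm x)).

Lemma xaddA : associative xadd.
Proof. by move=> x y z; apply: xv_inj; apply: funext => n /=; rewrite addrA. Qed.
Lemma xaddC : commutative xadd.
Proof. by move=> x y; apply: xv_inj; apply: funext => n /=; rewrite addrC. Qed.
Lemma xadd0 : left_id xzero xadd.
Proof. by move=> x; apply: xv_inj; apply: funext => n /=; rewrite add0r. Qed.
Lemma xaddN : left_inverse xzero xopp xadd.
Proof. by move=> x; apply: xv_inj; apply: funext => n /=; rewrite addNr. Qed.

HB.instance Definition _ := GRing.isZmodule.Build Xt xaddA xaddC xadd0 xaddN.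

Lemma xscaleA a b (x : Xt) : xscale a (xscale b x) = xscale (a * b) x.
Proof. by apply: xv_inj; apply: funext => n /=; rewrite scalerA. Qed.
Lemma xscale1 : left_id 1 xscale.
Proof. by move=> x; apply: xv_inj; apply: funext => n /=; rewrite scale1r. Qed.
Lemma xscaleDr : right_distributive xscale +%R.
Proof. by move=> a x y; apply: xv_inj; apply: funext => n /=; rewrite scalerDr. Qed.
Lemma xscaleDl (x : Xt) : {morph xscale^~ x : a b / a + b}.
Proof. by move=> a b; apply: xv_inj; apply: funext => n /=; rewrite scalerDl. Qed.

HB.instance Definition _ := GRing.Zmodule_isLmodule.Build (R[i]) Xt
  xscaleA xscale1 xscaleDr xscaleDl.

Lemma xvD (x y : Xt) : xv (x + y) = (fun n => xv x n + xv y n).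
Proof. by []. Qed.
Lemma xvZ a (x : Xt) : xv (a *: x) = (fun n => a *: xv x n).
Proof. by []. Qed.
Lemma xv0 : xv (0 : Xt) = (fun _ => 0).
Proof. by []. Qed.
Lemma xvN (x : Xt) : xv (- x) = (fun n => - xv x n).
Proof. by []. Qed.

End Sp.
Section W.
Variables (R : realType) (d : nat) (Y : lmodType (R[i])).

Definition madd (n m : mi d) : mi d := fun i => (n i + m i)%N.
Definition emi (j : 'I_d) (k : nat) : mi d := fun i => (k * (i == j))%N.
Definition mi0 : mi d := fun _ => 0%N.

Lemma maddC n m : madd n m = madd m n.
Proof. by apply: funext => i; rewrite /madd addnC. Qed.
Lemma maddA n m k : madd n (madd m k) = madd (madd n m) k.
Proof. by apply: funext => i; rewrite /madd addnA. Qed.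
Lemma madd0 n : madd n mi0 = n.
Proof. by apply: funext => i; rewrite /madd addn0. Qed.
Lemma mi_succE j n : mi_succ j n = madd n (emi j 1).
Proof. by apply: funext => i; rewrite /madd /emi /mi_succ mul1n. Qed.

Lemma mi_fact_gt0 (n : mi d) : (0 < mi_fact n)%N.
Proof. by apply: prodn_gt0 => i; apply: fact_gt0. Qed.

Lemma arv_w_gt0 (n : mi d) : 0 < arv_w R n :> R.
Proof.
by rewrite /arv_w divr_gt0 // ltr0n ?mi_fact_gt0 ?fact_gt0.
Qed.
Lemma arv_w_neq0 (n : mi d) : arv_w R n != 0 :> R.
Proof. by rewrite gt_eqF // arv_w_gt0. Qed.

Lemma arv_w0 : arv_w R mi0 = 1 :> R.
Proof.
rewrite /arv_w /mi_fact /mi_abs /mi0 big1 // big1 //=.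
by rewrite divr1.
Qed.

Definition Pop (n : mi d) (f : mi d -> Y) : mi d -> Y :=
  fun m => ((arv_w R (madd m n) / arv_w R m : R)%:C) *: f (madd m n).

Lemma scaleCC (a b : R) (y : Y) : a%:C *: (b%:C *: y) = (a * b)%:C *: y.
Proof. by rewrite scalerA -rmorphM. Qed.

Lemma Pop_comp n k f : Pop n (Pop k f) = Pop (madd k n) f.
Proof.
apply: funext => m; rewrite /Pop scaleCC -maddA [madd n k]maddC.
congr (_%:C *: _).
have h := arv_w_neq0 (madd m n).
by field; rewrite arv_w_neq0.
Qed.

Lemma Pop0 f : Pop mi0 f = f.
Proof.
by apply: funext => m; rewrite /Pop madd0 divrr ?unitfE ?arv_w_neq0 // scale1r.
Qed.

Lemma Mstar_Pop j f : Mstar j f = Pop (emi j 1) f.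
Proof. by apply: funext => m; rewrite /Mstar /Pop mi_succE. Qed.

Lemma iter_Mstar j k f : iter k (Mstar j) f = Pop (emi j k) f.
Proof.
elim: k => [|k IH] /=.
  have -> : emi j 0 = mi0 by apply: funext => i; rewrite /emi mul0n.
  by rewrite Pop0.
rewrite IH Mstar_Pop Pop_comp; congr Pop.
by apply: funext => i; rewrite /madd /emi; case: (i == j); rewrite ?muln1 ?muln0 ?addn1.
Qed.

Definition cnt (s : seq 'I_d) (n : mi d) : mi d :=
  fun i => (count_mem i s * n i)%N.

Lemma foldr_Mstar (n : mi d) s f :
  foldr (fun j g => iter (n j) (Mstar j) \o g) id s f = Pop (cnt s n) f.
Proof.
elim: s => [|j s IH] /=.
  have -> : cnt [::] n = mi0 by apply: funext => i.
  by rewrite Pop0.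
rewrite IH iter_Mstar Pop_comp; congr Pop.
apply: funext => i; rewrite /madd /emi /cnt /= mulnDl.
rewrite addnC; congr (_ + _)%N.
by case: (eqVneq i j) => [->|h]; rewrite /= ?muln1 ?mul1n ?muln0 ?mul0n.
Qed.

Lemma Mstar_powE n f : Mstar_pow n f = Pop n f.
Proof.
rewrite /Mstar_pow foldr_Mstar; congr Pop.
apply: funext => i; rewrite /cnt count_uniq_mem ?enum_uniq // mem_enum /=.
by rewrite mul1n.
Qed.

Lemma mi_abs_madd n m : mi_abs (madd n m) = (mi_abs n + mi_abs m)%N.
Proof. by rewrite /mi_abs /madd big_split. Qed.

Lemma mi_abs_emi j k : mi_abs (emi j k) = k.
Proof.
rewrite /mi_abs (bigD1 j) //= big1 /emi ?eqxx ?muln1 ?addn0 //.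
by move=> i /negbTE ->; rewrite muln0.
Qed.

End W.
Section DS.
Variables (R : realType) (d : nat).

Local Notation dsum := (@deg_sum R d).

Lemma deg_sum0 F : dsum 0 F = F (@mi0 d).
Proof.
rewrite /deg_sum.
have e : forall m : {ffun 'I_d -> 'I_1}, (fun i => nat_of_ord (m i)) = @mi0 d.
  by move=> m; apply: funext => i; rewrite /mi0; case: (m i) => -[].
rewrite (eq_bigr (fun _ => F (@mi0 d))) => [|m _]; last by rewrite e.
rewrite (eq_bigl predT) => [|m]; last first.
  by rewrite /= big1 // => i _; case: (m i) => -[].
by rewrite sumr_const card_ffun !card_ord exp1n mulr1n.
Qed.

Lemma deg_sum_ext N F G : (forall n, mi_abs n = N -> F n = G n) -> dsum N F = dsum N G.
Proof. by move=> h; apply: eq_bigr => m /eqP hm; apply: h. Qed.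

Lemma deg_sum_le N F G : (forall n, mi_abs n = N -> F n <= G n) -> dsum N F <= dsum N G.
Proof. by move=> h; apply: ler_sum => m /eqP hm; apply: h. Qed.

Lemma deg_sumD N F G : dsum N (fun n => F n + G n) = dsum N F + dsum N G.
Proof. by rewrite /deg_sum big_split. Qed.

Lemma deg_sumB N F G : dsum N (fun n => F n - G n) = dsum N F - dsum N G.
Proof. by rewrite /deg_sum sumrB. Qed.

Lemma deg_sum_sum N (F : 'I_d -> mi d -> R) :
  dsum N (fun n => \sum_(j < d) F j n) = \sum_(j < d) dsum N (F j).
Proof. by rewrite /deg_sum exchange_big. Qed.

Lemma deg_sum_ge0 N F : (forall n, mi_abs n = N -> 0 <= F n) -> 0 <= dsum N F.
Proof. by move=> h; apply: sumr_ge0 => m /eqP hm; apply: h. Qed.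

Lemma sum_ind (j : 'I_d) : (\sum_(i < d) ((i == j) : nat))%N = 1%N.
Proof. by rewrite (bigD1 j) //= eqxx big1 // => i /negbTE ->. Qed.

Lemma reindex_succ (j : 'I_d) N (G : mi d -> R) :
  \sum_(n : {ffun 'I_d -> 'I_N.+1} | (\sum_(i < d) (n i : nat))%N == N)
     G (madd (fun i => nat_of_ord (n i)) (emi j 1)) =
  \sum_(m : {ffun 'I_d -> 'I_N.+2} |
        ((\sum_(i < d) (m i : nat))%N == N.+1) && (0 < m j)%N)
     G (fun i => nat_of_ord (m i)).
Proof.
pose hS := fun n : {ffun 'I_d -> 'I_N.+1} =>
  [ffun i => (inord (n i + (i == j)) : 'I_N.+2)].
pose hP := fun m : {ffun 'I_d -> 'I_N.+2} =>
  [ffun i => (inord (m i - (i == j)) : 'I_N.+1)].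
have hSE : forall n i, (hS n i : nat) = (n i + (i == j))%N.
  move=> n i; rewrite ffunE inordK //; have := ltn_ord (n i).
  by case: (i == j) => /=; lia.
have hPE : forall n i, (hP (hS n) i : nat) = n i.
  move=> n i; rewrite ffunE hSE inordK; last first.
    by have := ltn_ord (n i); case: (i == j) => /=; lia.
  by case: (i == j) => /=; lia.
rewrite [RHS](reindex_onto hS hP) /=; last first.
  move=> m /andP [/eqP hs hj]; apply/ffunP => i; apply: val_inj => /=.
  have hmi : (m i - (i == j) < N.+1)%N.
    case: (eqVneq i j) => [->|h] /=; first by have := ltn_ord (m j); lia.
    have hle : (m i + m j <= \sum_(k < d) (m k : nat))%N.
      rewrite (bigD1 j) //= (bigD1 i) //= 1?eq_sym // addnA [(m j + _)%N]addnC.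
      exact: leq_addr.
    have := leq_trans hle (eq_leq hs); lia.
  have e1 : (hP m i : nat) = (m i - (i == j))%N by rewrite ffunE inordK.
  rewrite hSE e1.
  by case: (eqVneq i j) => [->|h] /=; lia.
apply: eq_big => [n|n _].
  have -> : hP (hS n) == n.
    by apply/eqP/ffunP => i; apply: val_inj; exact: hPE.
  have es : (\sum_(i < d) hS n i = \sum_(i < d) n i + 1)%N.
    by rewrite (eq_bigr _ (fun i _ => hSE n i)) big_split /= sum_ind.
  rewrite andbT es hSE eqxx addn1 eqSS /=.
  by rewrite addn1 andbT.
congr G; apply: funext => i; rewrite /madd /emi mul1n; exact/esym/hSE.
Qed.

End DS.
Section DR.
Variables (R : realType) (d : nat).

Lemma mi_fact_succ (n : mi d) j :
  mi_fact (madd n (emi j 1)) = (mi_fact n * (n j).+1)%N.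
Proof.
rewrite /mi_fact (bigD1 j) //= [in RHS](bigD1 j) //= /madd /emi eqxx muln1 addn1.
rewrite (eq_bigr (fun i => (n i)`!)) => [|i /negbTE ->]; last by rewrite muln0 addn0.
by rewrite factS; ring.
Qed.

Lemma deg_sum_rec N (H : mi d -> R) :
  deg_sum N.+1 (fun m => (N.+1)`!%:R / (mi_fact m)%:R * H m) =
  \sum_(j < d) deg_sum N (fun n => N`!%:R / (mi_fact n)%:R * H (madd n (emi j 1))).
Proof.
pose G (j : 'I_d) (m : mi d) : R := (N`! * m j)%:R / (mi_fact m)%:R * H m.
have step : forall j, deg_sum N (fun n => N`!%:R / (mi_fact n)%:R * H (madd n (emi j 1)))
  = \sum_(m : {ffun 'I_d -> 'I_N.+2} | ((\sum_(i < d) (m i : nat))%N == N.+1))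
       G j (fun i => nat_of_ord (m i)).
  move=> j; rewrite /deg_sum.
  rewrite (eq_bigr (fun n : {ffun 'I_d -> 'I_N.+1} =>
      G j (madd (fun i => nat_of_ord (n i)) (emi j 1)))); last first.
    move=> n _; rewrite /G mi_fact_succ /madd /emi eqxx muln1 addn1 !natrM.
    congr (_ * _).
    have h1 : (mi_fact (fun i => nat_of_ord (n i)))%:R != 0 :> R.
      by rewrite pnatr_eq0 -lt0n mi_fact_gt0.
    have h2 : (n j).+1%:R != 0 :> R by rewrite pnatr_eq0.
    by field; rewrite h1 andbT addrC natr1 pnatr_eq0.
  rewrite reindex_succ big_mkcondr /=; apply: eq_bigr => m _; rewrite /G.
  case: ifP => // /negbT; rewrite -leqNgt leqn0 => /eqP ->.
  by rewrite muln0 mul0r mul0r.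
rewrite (eq_bigr _ (fun j _ => step j)) exchange_big /=.
apply: eq_bigr => m /eqP hm; rewrite /G -mulr_suml -mulr_suml -natr_sum.
by rewrite -big_distrr /= hm factS mulnC.
Qed.

End DR.
Lemma dbl0 (V : zmodType) (x : V) : x = x + x -> x = 0.
Proof. by move=> h; apply: (@addrI _ x); rewrite addr0 -h. Qed.

Section IP.
Variables (R : realType) (V : lmodType (R[i])) (ip : V -> V -> R[i]).
Hypothesis hip : is_inner_product ip.

Lemma ipDZl a x y z : ip (a *: x + y) z = a * ip x z + ip y z.
Proof. by case: hip. Qed.
Lemma ip_sym x y : ip y x = conjc (ip x y).
Proof. by case: hip. Qed.
Lemma ip_pos x : 0 <= ip x x.
Proof. by case: hip. Qed.

Lemma ip0l z : ip 0 z = 0.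
Proof.
by apply: dbl0; have := ipDZl 1 0 0 z; rewrite scale1r !addr0 mul1r.
Qed.
Lemma ipZl a x z : ip (a *: x) z = a * ip x z.
Proof. by have := ipDZl a x 0 z; rewrite addr0 ip0l addr0. Qed.
Lemma ipDl x y z : ip (x + y) z = ip x z + ip y z.
Proof. by have := ipDZl 1 x y z; rewrite scale1r mul1r. Qed.

Lemma posC_real (z : R[i]) : 0 <= z -> z = (complex.Re z)%:C.
Proof. by case: z => a b; rewrite lecE /= => /andP [/eqP -> _]. Qed.

Lemma ip_real x : ip x x = (complex.Re (ip x x))%:C.
Proof. exact/posC_real/ip_pos. Qed.

Lemma Re_ip_ge0 x : 0 <= complex.Re (ip x x).
Proof. by have := ip_pos x; rewrite lecE => /andP []. Qed.

Lemma hnorm_ge0 x : 0 <= hnorm ip x.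
Proof. exact: sqrtr_ge0. Qed.

Lemma hnorm_sq x : hnorm ip x ^+ 2 = complex.Re (ip x x).
Proof. by rewrite /hnorm sqr_sqrtr // Re_ip_ge0. Qed.

Lemma hnorm_sqC x : (hnorm ip x ^+ 2)%:C = ip x x.
Proof. by rewrite hnorm_sq -ip_real. Qed.

Lemma hnormZ_real (a : R) x : hnorm ip (a%:C *: x) ^+ 2 = a ^+ 2 * hnorm ip x ^+ 2.
Proof.
apply: complexI; rewrite hnorm_sqC rmorphM /= hnorm_sqC ipZl ip_sym ipZl.
rewrite rmorphM /= -ip_sym.
have -> : (a -i* 0) = a%:C by apply/eqP; rewrite eq_complex /= oppr0 !eqxx.
by rewrite expr2 rmorphM mulrA.
Qed.

End IP.

Lemma polarization (R : realType) (V : lmodType (R[i])) (B : V -> V -> R[i]) :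
  (forall a x y z, B (a *: x + y) z = a * B x z + B y z) ->
  (forall x y, B y x = conjc (B x y)) ->
  (forall x, B x x = 0) -> forall x y, B x y = 0.
Proof.
move=> hl hs h0.
have hD : forall x y z, B (x + y) z = B x z + B y z.
  by move=> x y z; have := hl 1 x y z; rewrite scale1r mul1r.
have hZ : forall a x z, B (a *: x) z = a * B x z.
  move=> a x z; have := hl a x 0 z; rewrite addr0 => ->.
  have : B 0 z = 0 by apply: dbl0; have := hD 0 0 z; rewrite addr0.
  by move=> ->; rewrite addr0.
have key : forall x y, B x y + conjc (B x y) = 0.
  move=> x y; have := h0 (x + y); rewrite hD hs hD h0 add0r.
  by rewrite [B y (x + y)]hs hD h0 addr0 (hs x y) conjcK addrC.
move=> x y; have k1 := key x y; have k2 := key ('i *: x) y.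
rewrite hZ in k2; move: k1 k2; case: (B x y) => a b.
move=> /eqP k1 /eqP k2; move: k1 k2; rewrite !eq_complex /=.
move=> /andP [/eqP ha _] /andP [/eqP hb _].
by apply/eqP; rewrite eq_complex /=; apply/andP; split; apply/eqP; lra.
Qed.
Section Ops.
Variables (R : realType) (d : nat) (Y : lmodType (R[i])) (ipY : Y -> Y -> R[i]).
Variable (M : fun_hilbert d Y).
Hypothesis hMinv : forall (j : 'I_d) f, fh_mem M f -> fh_mem M (Mstar j f).

Definition Aop (j : 'I_d) (x : Xt M) : Xt M := MkX (hMinv j (xm x)).

Lemma Aop_lin j : linear (Aop j).
Proof.
move=> a x y; apply: xv_inj; apply: funext => n /=.
by rewrite /Mstar scalerDr !scalerA mulrC.
Qed.

HB.instance Definition _ j := GRing.isLinear.Build (R[i]) (Xt M) (Xt M) *:%R (Aop j) (Aop_lin j).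

Definition Cop (x : Xt M) : Y := eval0 (xv x).
Lemma Cop_lin : linear Cop.
Proof. by []. Qed.
HB.instance Definition _ := GRing.isLinear.Build (R[i]) (Xt M) Y *:%R Cop Cop_lin.

Definition ipX (x y : Xt M) : R[i] := fh_ip M (xv x) (xv y).

Lemma ipX_inner : is_inner_product ipX.
Proof.
split.
- by move=> a x y z; rewrite /ipX -fh_ip_lin //; exact: xm.
- by move=> x y; rewrite /ipX fh_ip_sym //; exact: xm.
- by move=> x; rewrite /ipX fh_ip_pos //; exact: xm.
- move=> x h; apply: xv_inj; exact: (fh_ip_def (xm x) h).
Qed.

Lemma ipX_complete : ip_complete ipX.
Proof.
move=> u hu.
have [v [hv hc]] := fh_complete (fun k => xm (u k)) hu.
by exists (MkX hv).
Qed.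

Lemma xv_foldr (n : mi d) s x :
  xv (foldr (fun j g => iter (n j) (Aop j) \o g) id s x) =
  foldr (fun j g => iter (n j) (Mstar j) \o g) id s (xv x).
Proof.
elim: s => [|j s IH] //=.
elim: (n j) => [|k IHk] //=.
by rewrite IHk.
Qed.

Lemma xv_Xpow n x : xv (op_pow (fun j => Aop j) n x) = Mstar_pow n (xv x).
Proof. exact: xv_foldr. Qed.

Definition Alin j : {linear Xt M -> Xt M} := Aop j.
Definition Clin : {linear Xt M -> Y} := Cop.

End Ops.
Section Lim.
Variable R : realType.

Lemma ser_ge0 (u : R ^nat) : (forall k, 0 <= u k) -> forall N, 0 <= series u N.
Proof. by move=> hu N; rewrite seriesEord /=; apply: sumr_ge0 => k _. Qed.

Lemma L1 (u : R ^nat) (B : R) : (forall k, 0 <= u k) ->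
  (forall N, \sum_(k < N) u k <= B) ->
  cvgn (series u) /\ limn (series u) <= B.
Proof.
move=> hu hB.
have hom : {homo series u : n m / (n <= m)%N >-> n <= m}.
  move=> n m hnm; rewrite /series /=.
  rewrite [X in _ <= X](big_cat_nat (leq0n n) hnm) /= lerDl.
  by apply: sumr_ge0 => k _.
have hub : has_ubound (range (series u)).
  by exists B; move=> _ [n _ <-]; rewrite seriesEord /=; exact: hB.
have hc := nondecreasing_cvgn hom hub.
have hc' : cvgn (series u) := cvgP _ hc.
split => //; apply: limr_le => //; apply: nearW => n.
by rewrite seriesEord /=; exact: hB.
Qed.

Lemma L2 (u : R ^nat) (T : nat -> R) (h : R) : (forall k, 0 <= u k) ->
  0 <= h -> (forall N, 0 <= T N) ->
  (forall N, \sum_(k < N) u k + T N = h ^+ 2) ->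
  (Num.sqrt (limn (series u)) = h <-> T @ \oo --> 0).
Proof.
move=> hu h0 hT0 hS.
have [hc hL] : cvgn (series u) /\ limn (series u) <= h ^+ 2.
  apply: L1 => // N; rewrite -(hS N) lerDl; exact: hT0.
have eT : T = (fun N => h ^+ 2 - series u N).
  by apply: funext => N; rewrite seriesEord /= -(hS N); ring.
have L0 : 0 <= limn (series u).
  by apply: limr_ge => //; apply: nearW => n; exact: ser_ge0.
split.
- move=> hs.
  have eL : limn (series u) = h ^+ 2 by rewrite -hs sqr_sqrtr.
  rewrite eT.
  have -> : (fun N => h ^+ 2 - series u N) = ((fun _ => h ^+ 2) - series u).
    by apply: funext.
  have -> : (0 : R) = h ^+ 2 - limn (series u) by rewrite eL subrr.
  apply: cvgB => //; exact: cvg_cst.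
- move=> hT.
  have hs : series u @ \oo --> h ^+ 2 - 0.
    have -> : series u = ((fun _ => h ^+ 2) - T).
      by apply: funext => N; rewrite eT /= opprB addrC subrK.
    apply: cvgB => //; exact: cvg_cst.
  rewrite subr0 in hs.
  by rewrite (cvg_lim _ hs) // sqrtr_sqr ger0_norm.
Qed.

End Lim.
Section Main.
Variables (R : realType) (d : nat) (Y : lmodType (R[i])) (ipY : Y -> Y -> R[i]).
Hypothesis hY : is_hilbert ipY.
Variable (M : fun_hilbert d Y).
Hypothesis hMinv : forall (j : 'I_d) f, fh_mem M f -> fh_mem M (Mstar j f).

Local Notation X := (Xt M).
Local Notation A := (Aop hMinv).
Local Notation nX := (hnorm (@ipX R d Y M)).
Local Notation nY := (hnorm ipY).

Definition Xp (n : mi d) (x : X) : X := op_pow (fun j => A j) n x.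

Definition Df (y : X) : R :=
  nX y ^+ 2 - nY (Cop y) ^+ 2 - \sum_(j < d) nX (A j y) ^+ 2.

Definition Tn (N : nat) (x : X) : R :=
  deg_sum N (fun n => N`!%:R / (mi_fact n)%:R * nX (Xp n x) ^+ 2).

Definition En (N : nat) (x : X) : R :=
  deg_sum N (fun n => N`!%:R / (mi_fact n)%:R * Df (Xp n x)).

Lemma A_Xp n j x : A j (Xp n x) = Xp (madd n (emi j 1)) x.
Proof.
apply: xv_inj; rewrite /Xp /= !xv_Xpow.
by rewrite !Mstar_powE Mstar_Pop Pop_comp.
Qed.

Lemma Xp0 x : Xp (@mi0 d) x = x.
Proof. by apply: xv_inj; rewrite /Xp xv_Xpow Mstar_powE Pop0. Qed.

Lemma Cop_Xp n x : Cop (Xp n x) = (arv_w R n)%:C *: xv x n.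
Proof.
rewrite /Cop /eval0 /Xp xv_Xpow Mstar_powE /Pop.
have -> : madd (fun _ => 0%N) n = n by apply: funext => i; rewrite /madd add0n.
by have -> := arv_w0 R d; rewrite divr1.
Qed.

Lemma mi_fact0 : mi_fact (@mi0 d) = 1%N.
Proof. by rewrite /mi_fact big1. Qed.

Lemma natr_fact_neq0 (n : mi d) : (mi_fact n)%:R != 0 :> R.
Proof. by rewrite pnatr_eq0 -lt0n mi_fact_gt0. Qed.

Lemma natr_factN_neq0 (N : nat) : N`!%:R != 0 :> R.
Proof. by rewrite pnatr_eq0 -lt0n fact_gt0. Qed.

Lemma arv_terms_eq N x :
  deg_sum N (fun n => N`!%:R / (mi_fact n)%:R * nY (Cop (Xp n x)) ^+ 2) =
  arv_terms ipY (xv x) N.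
Proof.
apply: deg_sum_ext => n hn; rewrite Cop_Xp (hnormZ_real hY.1) /arv_w hn.
by field; rewrite natr_fact_neq0 natr_factN_neq0.
Qed.

Lemma Tn_step N x : Tn N x = arv_terms ipY (xv x) N + Tn N.+1 x + En N x.
Proof.
rewrite /Tn /En -arv_terms_eq (deg_sum_rec N (fun m => nX (Xp m x) ^+ 2)) /=.
have e : forall j : 'I_d,
  deg_sum N (fun n => N`!%:R / (mi_fact n)%:R * nX (Xp (madd n (emi j 1)) x) ^+ 2) =
  deg_sum N (fun n => N`!%:R / (mi_fact n)%:R * nX (A j (Xp n x)) ^+ 2).
  by move=> j; apply: deg_sum_ext => n _; rewrite A_Xp.
rewrite (eq_bigr _ (fun j _ => e j)).
rewrite -deg_sum_sum -!deg_sumD; apply: deg_sum_ext => n _.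
rewrite /Df -mulr_sumr; ring.
Qed.

Lemma main_id N x :
  \sum_(k < N) arv_terms ipY (xv x) k + Tn N x + \sum_(k < N) En k x = nX x ^+ 2.
Proof.
elim: N => [|N IH].
  by rewrite !big_ord0 /Tn deg_sum0 mi_fact0 fact0 divr1 mul1r Xp0 add0r addr0.
rewrite !big_ord_recr /= -IH (Tn_step N x); ring.
Qed.

Lemma arv_terms_ge0 (f : mi d -> Y) N : 0 <= arv_terms ipY f N.
Proof.
apply: deg_sum_ge0 => n _; apply: mulr_ge0; first exact/ltW/arv_w_gt0.
by rewrite exprn_ge0 // hnorm_ge0.
Qed.

Lemma Tn_ge0 N x : 0 <= Tn N x.
Proof.
apply: deg_sum_ge0 => n _; apply: mulr_ge0.
  by rewrite divr_ge0 ?ler0n.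
by rewrite exprn_ge0 // hnorm_ge0.
Qed.

Lemma En_ge0 N x : (forall y, 0 <= Df y) -> 0 <= En N x.
Proof.
move=> h; apply: deg_sum_ge0 => n _; apply: mulr_ge0 => //.
Qed.

Lemma En_eq0 N x : (forall y, Df y = 0) -> En N x = 0.
Proof.
move=> h; rewrite /En (deg_sum_ext (G := fun _ => 0)) => [|n _]; last by rewrite h mulr0.
by rewrite /deg_sum big1.
Qed.


Lemma AlinE j x : Alin hMinv j x = A j x.
Proof. by []. Qed.
Lemma ClinE x : (@Clin R d Y M) x = Cop x.
Proof. by []. Qed.

Lemma Df_ge0_of :
  (forall f, fh_mem M f ->
      \sum_(j < d) hnorm (fh_ip M) (Mstar j f) ^+ 2
        <= hnorm (fh_ip M) f ^+ 2 - hnorm ipY (eval0 f) ^+ 2) ->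
  forall y, 0 <= Df y.
Proof.
move=> h y; have := h _ (xm y).
have e1 : \sum_(j < d) nX (A j y) ^+ 2 =
  \sum_(j < d) hnorm (fh_ip M) (Mstar j (xv y)) ^+ 2 by [].
have e2 : nX y = hnorm (fh_ip M) (xv y) by [].
have e3 : nY (Cop y) = hnorm ipY (eval0 (xv y)) by [].
rewrite /Df e1 e2 e3; lra.
Qed.

Lemma Df_eq0_of :
  (forall f, fh_mem M f ->
      \sum_(j < d) hnorm (fh_ip M) (Mstar j f) ^+ 2
        = hnorm (fh_ip M) f ^+ 2 - hnorm ipY (eval0 f) ^+ 2) ->
  forall y, Df y = 0.
Proof.
move=> h y; have := h _ (xm y).
have e1 : \sum_(j < d) nX (A j y) ^+ 2 =
  \sum_(j < d) hnorm (fh_ip M) (Mstar j (xv y)) ^+ 2 by [].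
have e2 : nX y = hnorm (fh_ip M) (xv y) by [].
have e3 : nY (Cop y) = hnorm ipY (eval0 (xv y)) by [].
rewrite /Df e1 e2 e3; lra.
Qed.

Lemma obs_id x : obs_op (fun j => A j) (@Cop R d Y M) x = xv x.
Proof.
apply: funext => n; rewrite /obs_op.
change (op_pow (fun j => A j) n x) with (Xp n x).
rewrite Cop_Xp scaleCC /arv_w.
have -> : ((mi_abs n)`!%:R / (mi_fact n)%:R * ((mi_fact n)%:R / (mi_abs n)`!%:R)) = 1 :> R.
  by field; rewrite natr_fact_neq0 natr_factN_neq0.
by rewrite scale1r.
Qed.

Lemma hnorm_ge0' (V : Type) (ip : V -> V -> R[i]) x : 0 <= hnorm ip x.
Proof. exact: sqrtr_ge0. Qed.

Lemma sqr_le (a b : R) : 0 <= a -> 0 <= b -> a ^+ 2 <= b ^+ 2 -> a <= b.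
Proof. by move=> ha hb; rewrite ler_sqr ?nnegrE. Qed.

Lemma A_bounded (hD : forall y, 0 <= Df y) j : bounded_op (@ipX R d Y M) (@ipX R d Y M) (A j).
Proof.
exists 1 => x; rewrite mul1r; apply: sqr_le; rewrite ?hnorm_ge0' //.
have := hD x; rewrite /Df (bigD1 j) //=.
have : 0 <= \sum_(i < d | i != j) nX (A i x) ^+ 2 by apply: sumr_ge0 => i _; rewrite exprn_ge0 // hnorm_ge0'.
have : 0 <= nY (Cop x) ^+ 2 by rewrite exprn_ge0 // hnorm_ge0'.
lra.
Qed.

Lemma C_bounded (hD : forall y, 0 <= Df y) : bounded_op (@ipX R d Y M) ipY (@Cop R d Y M).
Proof.
exists 1 => x; rewrite mul1r; apply: sqr_le; rewrite ?hnorm_ge0' //.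
have := hD x; rewrite /Df.
have : 0 <= \sum_(i < d) nX (A i x) ^+ 2 by apply: sumr_ge0 => i _; rewrite exprn_ge0 // hnorm_ge0'.
lra.
Qed.

Lemma contr_pair (hD : forall y, 0 <= Df y) :
  contractive_pair ipY (@ipX R d Y M) (@Cop R d Y M) (fun j => A j).
Proof. move=> x; have := hD x; rewrite /Df; lra. Qed.

Lemma commA : commuting (fun j => A j).
Proof.
move=> i j x; apply: xv_inj => /=.
by rewrite !Mstar_Pop !Pop_comp maddC.
Qed.

Lemma exobs : exactly_observable M (@ipX R d Y M) (@Cop R d Y M) (fun j => A j).
Proof.
split; first by move=> x; rewrite obs_id; exact: xm.
exists 1, 1; split => //; split => // x; rewrite obs_id mul1r; split => //.
Qed.

Lemma rangeobs : range_obs M (@Cop R d Y M) (fun j => A j).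
Proof.
move=> f; split.
  by move=> hf; exists (MkX hf); rewrite obs_id.
by case=> x ->; rewrite obs_id; exact: xm.
Qed.

Lemma contr_incl (hD : forall y, 0 <= Df y) : contractively_included ipY M.
Proof.
move=> f hf; pose x := MkX hf.
have hB : forall N, \sum_(k < N) arv_terms ipY f k <= nX x ^+ 2.
  move=> N; rewrite -(main_id N x).
  have := Tn_ge0 N x.
  have : 0 <= \sum_(k < N) En k x by apply: sumr_ge0 => k _; exact: En_ge0.
  rewrite /=; lra.
have [_ hL] := L1 (arv_terms_ge0 f) hB.
change (hnorm (fh_ip M) f) with (nX x).
rewrite /arv_norm -[nX x]ger0_norm ?hnorm_ge0' // -sqrtr_sqr.
exact: ler_wsqrtr.
Qed.

Lemma iso_pair (hD : forall y, Df y = 0) :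
  isometric_pair ipY (@ipX R d Y M) (@Cop R d Y M) (fun j => A j).
Proof.
have hYi := hY.1; have hXi := @ipX_inner R d Y M.
pose B := fun x y : X => ipY (Cop x) (Cop y) +
  \sum_(j < d) ipX (A j x) (A j y) - ipX x y.
suff hB : forall x y, B x y = 0.
  by move=> x y; apply/eqP; rewrite -subr_eq0; apply/eqP; exact: hB.
apply: polarization.
- move=> a x y z; rewrite /B.
  have -> : Cop (a *: x + y) = a *: Cop x + Cop y by [].
  rewrite (ipDZl hYi) (ipDZl hXi).
  under eq_bigr => j _ do rewrite (Aop_lin hMinv j a x y) (ipDZl hXi).
  rewrite big_split /= -mulr_sumr; ring.
- move=> x y; rewrite /B (ip_sym hYi (Cop x)) (ip_sym hXi x).
  under eq_bigr => j _ do rewrite (ip_sym hXi (A j x)).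
  by rewrite raddfB raddfD raddf_sum.
- move=> x; rewrite /B -(hnorm_sqC hYi) -(hnorm_sqC hXi).
  under eq_bigr => j _ do rewrite -(hnorm_sqC hXi).
  rewrite -rmorph_sum -rmorphD -rmorphB.
  have := hD x; rewrite /Df => e.
  have -> : nY (Cop x) ^+ 2 + \sum_(i < d) nX (A i x) ^+ 2 - nX x ^+ 2 = 0 by lra.
  by [].
Qed.

Lemma iso_iff (hD : forall y, Df y = 0) :
  isometrically_included ipY M <->
  (forall f, fh_mem M f ->
     (fun N : nat => deg_sum N (fun n =>
        ((N`!)%:R / (mi_fact n)%:R) *
        hnorm (fh_ip M) (Mstar_pow n f) ^+ 2)) @ \oo --> (0 : R)).
Proof.
have key : forall f (hf : fh_mem M f),
  arv_norm ipY f = hnorm (fh_ip M) f <->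
  (fun N : nat => deg_sum N (fun n =>
        ((N`!)%:R / (mi_fact n)%:R) *
        hnorm (fh_ip M) (Mstar_pow n f) ^+ 2)) @ \oo --> (0 : R).
  move=> f hf; pose x := MkX hf.
  have -> : (fun N : nat => deg_sum N (fun n =>
        ((N`!)%:R / (mi_fact n)%:R) *
        hnorm (fh_ip M) (Mstar_pow n f) ^+ 2)) = (fun N => Tn N x).
    apply: funext => N; apply: deg_sum_ext => n _.
    change (nX (Xp n x)) with (hnorm (fh_ip M) (xv (Xp n x))).
    by rewrite /Xp xv_Xpow.
  change (hnorm (fh_ip M) f) with (nX x).
  apply: L2.
  - exact: arv_terms_ge0.
  - exact: hnorm_ge0'.
  - move=> N; exact: Tn_ge0.
  - move=> N; have e : \sum_(k < N) En k x = 0.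
      by rewrite big1 // => k _; exact: En_eq0.
    by rewrite -(main_id N x) e addr0.
split.
- by move=> H f hf; apply/(key f hf)/H.
- by move=> H f hf; apply/(key f hf)/H.
Qed.

End Main.

Unset Implicit Arguments.

Theorem theorem3p16 (R : realType) (d : nat) (hd : (0 < d)%N)
  (Y : lmodType (R[i])) (ipY : Y -> Y -> R[i]) (hY : is_hilbert ipY)
  (M : fun_hilbert d Y)
  (hMH : forall f, fh_mem M f -> in_arveson ipY f)
  (hMinv : forall (j : 'I_d) f, fh_mem M f -> fh_mem M (Mstar j f)) :
  ((forall f, fh_mem M f ->
      \sum_(j < d) hnorm (fh_ip M) (Mstar j f) ^+ 2
        <= hnorm (fh_ip M) f ^+ 2 - hnorm ipY (eval0 f) ^+ 2) ->
    exists (X : lmodType (R[i])) (ipX : X -> X -> R[i]) (A : 'I_d -> {linear X -> X})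
           (Cop : {linear X -> Y}),
      is_hilbert ipX /\ commuting (fun j => A j : X -> X) /\
          ((forall j, bounded_op ipX ipX (A j)) /\ bounded_op ipX ipY Cop) /\
          contractive_pair ipY ipX Cop (fun j => A j) /\
          exactly_observable M ipX Cop (fun j => A j) /\
          range_obs M Cop (fun j => A j) /\
          contractively_included ipY M)
  /\
  ((forall f, fh_mem M f ->
      \sum_(j < d) hnorm (fh_ip M) (Mstar j f) ^+ 2
        = hnorm (fh_ip M) f ^+ 2 - hnorm ipY (eval0 f) ^+ 2) ->
    exists (X : lmodType (R[i])) (ipX : X -> X -> R[i]) (A : 'I_d -> {linear X -> X})
           (Cop : {linear X -> Y}),
      is_hilbert ipX /\ commuting (fun j => A j : X -> X) /\
          ((forall j, bounded_op ipX ipX (A j)) /\ bounded_op ipX ipY Cop) /\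
          isometric_pair ipY ipX Cop (fun j => A j) /\
          exactly_observable M ipX Cop (fun j => A j) /\
          range_obs M Cop (fun j => A j) /\
          (contractively_included ipY M /\
           (isometrically_included ipY M <->
            (forall f, fh_mem M f ->
               (fun N : nat => deg_sum N (fun n =>
                  ((N`!)%:R / (mi_fact n)%:R) *
                  hnorm (fh_ip M) (Mstar_pow n f) ^+ 2)) @ \oo --> (0 : R))))).
Proof.
have hil : is_hilbert (@ipX R d Y M) by split; [exact: ipX_inner | exact: ipX_complete].
split.
- move=> h1.
  have hD : forall y : Xt M, 0 <= Df ipY hMinv y by apply: Df_ge0_of.
  exists (Xt M), (@ipX R d Y M), (Alin hMinv), (Clin M).
  split; first exact: hil.
  split; first exact: (commA hMinv).
  split; first by split; [move=> j; exact: (A_bounded hD) | exact: (C_bounded hD)].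
  split; first exact: (contr_pair hD).
  split; first exact: (exobs hMinv).
  split; first exact: (rangeobs hMinv).
  exact: (contr_incl hY hD).
- move=> h1.
  have hD : forall y : Xt M, Df ipY hMinv y = 0 by apply: Df_eq0_of.
  have hD' : forall y : Xt M, 0 <= Df ipY hMinv y by move=> y; rewrite hD.
  exists (Xt M), (@ipX R d Y M), (Alin hMinv), (Clin M).
  split; first exact: hil.
  split; first exact: (commA hMinv).
  split; first by split; [move=> j; exact: (A_bounded hD') | exact: (C_bounded hD')].
  split; first exact: (iso_pair hY hD).
  split; first exact: (exobs hMinv).
  split; first exact: (rangeobs hMinv).
  split; first exact: (contr_incl hY hD').
  exact: (iso_iff hY hD).
Qed.
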